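(* Let $n\geq1$ and $j\geq0$ be integers. (i) If $n$ is even, then $\widehat{A}_n(q^{j},q)$ is divisible in $\mathbb{Z}[q]$ by $(1+q)^{\lfloor n/2\rfloor}$ when $j$ is even, and by $(1+q)^{\lfloor (n-1)/2\rfloor}$ when $j$ is odd. (ii) If $n$ is odd, then $\widehat{A}_n(q^{j},q)$ is divisible by $(1+q)^{\lfloor n/2\rfloor}$ for all $j\geq0$. In particular, $\widehat{A}_n(1,q)$ is divisible by $(1+q)^{\lfloor n/2\rfloor}$.
   Context: For $\pi=\pi_1\cdots\pi_n\in\mathfrak{S}_n$, $\widehat{D}(\pi)=\{2i:\pi_{2i}<\pi_{2i+1}\}\cup\{2i+1:\pi_{2i+1}>\pi_{2i+2}\}$ (indices in $\{1,\dots,n-1\}$), ${\rm altdes}(\pi)=|\widehat{D}(\pi)|$, ${\rm altmaj}(\pi)=\sum_{i\in\widehat{D}(\pi)}i$, and $\widehat{A}_n(t,q)=\sum_{\pi\in\mathfrak{S}_n}t^{{\rm altdes}(\pi)}q^{{\rm altmaj}(\pi)}$. *)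

(* Defs.v *)
From HB Require Import structures.
From mathcomp Require Import all_boot all_order all_algebra all_fingroup.
Set Implicit Arguments. Unset Strict Implicit. Unset Printing Implicit Defensive.
Import GRing.Theory.
Local Open Scope ring_scope.

(* One-line notation of a permutation s of {0,...,n-1}: the word
   pi_1 ... pi_n with pi_i = s (i-1) (values shifted by -1, which does
   not affect any comparison). *)
Definition pword (n : nat) (s : 'S_n) : seq nat := [seq val (s i) | i <- enum 'I_n].

(* pi_i for 1 <= i <= n (1-based positions). *)
Definition pent (n : nat) (s : 'S_n) (i : nat) : nat := nth 0%N (pword s) i.-1.

Definition altD (n : nat) (s : 'S_n) : seq nat :=
  [seq i <- iota 1 n.-1 |
     if odd i then (pent s (i.+1) < pent s i)%N else (pent s i < pent s (i.+1))%N].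

Definition altdes (n : nat) (s : 'S_n) : nat := size (altD s).
Definition altmaj (n : nat) (s : 'S_n) : nat := sumn (altD s).

Definition AhatSpec (n j : nat) : {poly int} :=
  \sum_(s : 'S_n) 'X^(j * altdes s + altmaj s).

Definition zdvdp (d p : {poly int}) : Prop := exists g : {poly int}, p = d * g.

(* Main.v *)
Require Import Defs.
From HB Require Import structures.
From mathcomp Require Import all_boot all_order all_algebra all_fingroup.
From mathcomp Require Import zify ring.
From Stdlib Require Import Classical_Prop.
Import GRing.Theory.
Local Open Scope ring_scope.
Set Implicit Arguments. Unset Strict Implicit. Unset Printing Implicit Defensive.

Definition Dk N (s : 'S_N.+1) (k : nat) : bool :=
  if odd k then (pent s k.+1 < pent s k)%N else (pent s k < pent s k.+1)%N.
Definition es N (s : 'S_N.+1) (k : nat) : int := if Dk s k.+1 then 1 else -1.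

Lemma weight_prod (l : seq nat) (P : pred nat) j :
  'X^(j * size (filter P l) + sumn (filter P l)) =
  \prod_(x <- l) (if P x then 'X^(j + x) else 1) :> {poly int}.
Proof.
elim: l => [|x l IH]; first by rewrite big_nil muln0 expr0.
rewrite big_cons /=; case: (P x); last by rewrite mul1r.
by rewrite /= -IH -exprD; congr ('X^_); rewrite mulnS; lia.
Qed.

Lemma Ahat_prod N j : AhatSpec N.+1 j =
  \sum_(s : 'S_N.+1) \prod_(k < N) (if Dk s k.+1 then 'X^(j + k.+1) else 1).
Proof.
apply: eq_bigr => s _.
rewrite /altdes /altmaj /altD /= weight_prod.
rewrite -(addn0 1%N) iotaDl big_map /=.
have -> : iota 0 N = index_iota 0 N by rewrite /index_iota subn0.
by rewrite big_mkord.
Qed.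

Lemma two_mul d c : 2%:R * (if d then 'X^c else 1) =
  (1 + 'X^c) + ((if d then 1 else -1 : int))%:P * ('X^c - 1) :> {poly int}.
Proof. by case: d; rewrite ?polyCN polyC1; ring. Qed.

Lemma two_mul2 N (s : 'S_N.+1) (i : nat) j :
  2%:R * (if Dk s i.+1 then 'X^(j + i.+1) else 1) =
  \sum_(b : bool) (if b then (es s i)%:P * ('X^(j + i.+1) - 1) else 1 + 'X^(j + i.+1)) :> {poly int}.
Proof. by rewrite two_mul big_bool /= addrC. Qed.

Lemma main_expand N j : (2%:R ^+ N : {poly int}) * AhatSpec N.+1 j =
  \sum_(f : {ffun 'I_N -> bool})
    (\prod_(i < N) (if f i then 'X^(j + i.+1) - 1 else 1 + 'X^(j + i.+1))) *
    (\sum_(s : 'S_N.+1) \prod_(i < N | f i) es s i)%:P.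
Proof.
rewrite Ahat_prod (_ : 2%:R ^+ N = \prod_(i < N) 2%:R); last by rewrite prodr_const card_ord.
rewrite mulr_sumr.
under eq_bigr => s _.
  rewrite -big_split /=.
  under eq_bigr => i _ do rewrite two_mul2.
  rewrite bigA_distr_bigA /=.
  over.
rewrite exchange_big /=; apply: eq_bigr => f _.
rewrite rmorph_sum mulr_sumr; apply: eq_bigr => s _.
rewrite rmorph_prod /= (big_mkcond (fun i => f i)) -big_split /=.
by apply: eq_bigr => i _; case: (f i); rewrite ?mulr1 // mulrC.
Qed.
Lemma prod_root (I : Type) (l : seq I) (P : I -> {poly int}) (good : pred I) :
  (forall i, good i -> root (P i) (-1)) ->
  (1 + 'X) ^+ (\sum_(i <- l) (good i : nat))%N %| \prod_(i <- l) P i.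
Proof.
move=> H; elim: l => [|x l IH]; first by rewrite !big_nil expr0 dvd1p.
rewrite !big_cons; case/boolP: (good x) => gx /=.
  rewrite add1n exprS; apply: dvdp_mul => //.
  have := H x gx; rewrite root_factor_theorem.
  by rewrite polyCN opprK addrC.
by rewrite add0n dvdp_mull.
Qed.

Lemma root_pm c (b : bool) : (if b then ~~ odd c else odd c) ->
  root ((if b then 'X^c - 1 else 1 + 'X^c) : {poly int}) (-1).
Proof.
move=> h; apply/rootP; case: b h => h; rewrite !hornerE -signr_odd.
  by rewrite (negbTE h) expr0 subrr.
by rewrite h expr1 addrN.
Qed.

Definition Ff N (f : 'I_N -> bool) (k : nat) : bool :=
  if insub k is Some i then f i else false.

Lemma Ff_val N (f : 'I_N -> bool) (i : 'I_N) : Ff f i = f i.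
Proof. by rewrite /Ff valK. Qed.

Lemma Ff_out N (f : 'I_N -> bool) k : (N <= k)%N -> Ff f k = false.
Proof. by move=> h; rewrite /Ff insubF // ltnNge h. Qed.

Lemma sum_odd N : (\sum_(0 <= k < N) odd k)%N = N./2.
Proof.
elim: N => [|N IH]; first by rewrite big_geq.
by rewrite big_nat_recr //= IH uphalf_half addnC.
Qed.

Lemma sum_even N : (\sum_(0 <= k < N) ~~ odd k)%N = N.+1./2.
Proof.
elim: N => [|N IH]; first by rewrite big_geq.
rewrite big_nat_recr //= IH /= !uphalf_half /=; case: (odd N) => /=; lia.
Qed.
Section Runs.
Local Open Scope nat_scope.
Local Open Scope nat_scope.
Variables (F : nat -> bool) (N : nat).
Hypothesis Fout : forall k, (N <= k)%N -> F k = false.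

Definition oddrun (a r : nat) : Prop :=
  [/\ odd r, (a + r <= N)%N, (forall k, (a <= k < a + r)%N -> F k),
      (a = 0%N \/ ~~ F a.-1) & ~~ F (a + r)].

Definition cO a := (\sum_(a <= k < N) (F k && odd k))%N.
Definition cE a := (\sum_(a <= k < N) (F k && ~~ odd k))%N.

Lemma cO_skip b : ~~ F b -> cO b = cO b.+1.
Proof.
move=> Fb; rewrite /cO; case: (ltnP b N) => hb.
  by rewrite big_ltn // (negbTE Fb).
by rewrite !big_geq // (leq_trans hb).
Qed.
Lemma cE_skip b : ~~ F b -> cE b = cE b.+1.
Proof.
move=> Fb; rewrite /cE; case: (ltnP b N) => hb.
  by rewrite big_ltn // (negbTE Fb).
by rewrite !big_geq // (leq_trans hb).
Qed.

Lemma alt_even a t :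
  (\sum_(a <= k < a + t.*2) odd k)%N = (\sum_(a <= k < a + t.*2) ~~ odd k)%N.
Proof.
elim: t => [|t IH]; first by rewrite addn0 !big_geq.
by rewrite doubleS !addnS !big_nat_recr //=; lia.
Qed.

Lemma balanced : (forall a r, ~ oddrun a r) -> cO 0 = cE 0.
Proof.
move=> noodd.
suff H : forall d a, (N - a <= d)%N -> (a = 0%N \/ ~~ F a.-1) -> cO a = cE a.
  by apply: (H N) => //; [rewrite subn0 | left].
elim=> [|d IH] a hd hb.
  by rewrite /cO /cE !big_geq //; lia.
case: (ltnP a N) => haN; last by rewrite /cO /cE !big_geq.
case Fa: (F a); last first.
  rewrite cO_skip ?Fa // cE_skip ?Fa //; apply: IH; [lia | right; by rewrite Fa].
have exr : exists r, ~~ F (a + r).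
  by exists (N - a); rewrite subnKC ?Fout // ltnW.
case: (ex_minnP exr) => r Fr rmin.
have inrun : forall k, (a <= k < a + r)%N -> F k.
  move=> k /andP [h1 h2]; apply/negPn/negP => Fk.
  have := rmin (k - a) ; rewrite subnKC // => /(_ Fk); lia.
have r0 : (0 < r)%N by case: r Fr {rmin inrun} => [|//]; rewrite addn0 Fa.
have arN : (a + r <= N)%N.
  case: (leqP (a + r) N) => // h.
  have : F (a + r).-1 by apply: inrun; lia.
  by rewrite Fout //; lia.
case/boolP: (odd r) => ro.
  by exfalso; apply: (noodd a r); split.
have [t rt] : exists t, r = t.*2 by exists r./2; rewrite -[LHS](odd_double_half r) (negbTE ro).
have splitO : cO a = ((\sum_(a <= k < a + r) odd k) + cO (a + r))%N.
  rewrite /cO (@big_cat_nat _ _ _ (a + r)) /=; try lia; congr (_ + _)%N.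
  by apply: eq_big_nat => k hk; rewrite inrun.
have splitE : cE a = ((\sum_(a <= k < a + r) ~~ odd k) + cE (a + r))%N.
  rewrite /cE (@big_cat_nat _ _ _ (a + r)) /=; try lia; congr (_ + _)%N.
  by apply: eq_big_nat => k hk; rewrite inrun.
rewrite splitO splitE rt alt_even -rt cO_skip // cE_skip //; congr (_ + _)%N.
by apply: IH; [lia | right].
Qed.
End Runs.

Lemma divis N j (f : 'I_N -> bool) : cO (Ff f) N 0 = cE (Ff f) N 0 ->
  (1 + 'X : {poly int}) ^+ (if odd j then N./2 else N.+1./2) %|
  \prod_(i < N) (if f i then 'X^(j + i.+1) - 1 else 1 + 'X^(j + i.+1)).
Proof.
move=> bal.
pose good := fun i : 'I_N => f i (+) odd (j + i.+1).
have H := @prod_root _ (index_enum 'I_N)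
  (fun i : 'I_N => (if f i then 'X^(j + i.+1) - 1 else 1 + 'X^(j + i.+1)) : {poly int}) good.
apply: (dvdp_trans _ (H _)); last first.
  by move=> i; rewrite /good /= => h; apply: root_pm; move: h; case: (f i).
apply: dvdp_exp2l.
have -> : (\sum_(i <- index_enum 'I_N) good i = \sum_(0 <= k < N) (Ff f k (+) odd (j + k.+1)))%N.
  by rewrite big_mkord; apply: eq_bigr => i _; rewrite Ff_val.
have key : forall y : nat -> bool,
  (\sum_(0 <= k < N) (Ff f k (+) y k) + \sum_(0 <= k < N) (Ff f k && y k) =
   \sum_(0 <= k < N) y k + \sum_(0 <= k < N) (Ff f k && ~~ y k))%N.
  move=> y; rewrite -!big_split /=; apply: eq_bigr => k _.
  by case: (Ff f k); case: (y k).
have oj : forall k, odd (j + k.+1) = odd j (+) ~~ odd k by move=> k; rewrite oddD /=.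
have -> : (\sum_(0 <= k < N) (Ff f k (+) odd (j + k.+1)) =
   \sum_(0 <= k < N) (Ff f k (+) (if odd j then odd k else ~~ odd k)))%N.
  by apply: eq_bigr => k _; rewrite oj; case: (odd j); rewrite /= ?negbK.
move: bal; rewrite /cO /cE.
case: (odd j).
  have := key (fun k => odd k); rewrite sum_odd /=.
  lia.
have := key (fun k => ~~ odd k); rewrite sum_even /=.
under [X in (_ = (_ + X)%N) -> _]eq_bigr => k _ do rewrite negbK.
lia.
Qed.
Section Flip.
Variables (N a r : nat).
Hypothesis ar : (a + r <= N)%N.
Hypothesis ro : odd r.

Definition W (s : 'S_N.+1) (p : nat) : nat := val (s (inord p)).

Lemma pent_W s k : (0 < k)%N -> (k <= N.+1)%N -> pent s k = W s k.-1.
Proof.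
move=> k0 kN; rewrite /pent /pword /W.
rewrite (nth_map ord0); last by rewrite size_enum_ord; lia.
congr (val (s _)); apply: val_inj; rewrite /= nth_enum_ord ?inordK //; try lia.

Qed.

Lemma W_inj s p p' : (p <= N)%N -> (p' <= N)%N -> W s p = W s p' -> p = p'.
Proof.
move=> hp hp' /val_inj /perm_inj /(congr1 (@nat_of_ord _)); rewrite !inordK //; lia.
Qed.

Lemma Dk_W s k : (k < N)%N ->
  Dk s k.+1 = if odd k.+1 then (W s k.+1 < W s k)%N else (W s k < W s k.+1)%N.
Proof. by move=> hk; rewrite /Dk !pent_W //; lia. Qed.

Definition rho (p : 'I_N.+1) : 'I_N.+1 :=
  if (a <= p <= a + r)%N then inord (a + (a + r) - p) else p.

Lemma rhoK : involutive rho.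
Proof.
move=> p; rewrite {2}/rho; case: ifP => hp; last by rewrite /rho hp.
rewrite /rho inordK; last by lia.
have -> : (a <= a + (a + r) - p <= a + r)%N by lia.
by apply: val_inj; rewrite /= inordK; lia.
Qed.

Definition Rp : 'S_N.+1 := perm (inv_inj rhoK).

Lemma W_Rp s p : (p <= N)%N ->
  W (Rp * s)%g p = if (a <= p <= a + r)%N then W s (a + (a + r) - p) else W s p.
Proof.
by move=> hp; rewrite /W permM permE /rho inordK //; case: ifP => // _.
Qed.

Lemma es_flip s k : (a <= k < a + r)%N -> es (Rp * s)%g k = - es s (a + (a + r) - k.+1).
Proof.
move=> hk; set k' := (a + (a + r) - k.+1)%N.
have hk' : (k' < N)%N by rewrite /k'; lia.
rewrite /es !Dk_W //; last by lia.
rewrite !W_Rp; try lia.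
have -> : (a <= k <= a + r)%N by lia.
have -> : (a <= k.+1 <= a + r)%N by lia.
have e1 : (a + (a + r) - k = k'.+1)%N by rewrite /k'; lia.
have e2 : (a + (a + r) - k.+1 = k')%N by [].
rewrite e1 e2.
have op : odd k.+1 = odd k'.+1.
  have [t rt] : exists t, r = t.*2.+1.
    by exists r./2; rewrite -[LHS](odd_double_half r) ro.
  have : (k + k' = (a + t).*2)%N by rewrite /k' -!addnn; lia.
  move/(congr1 odd); rewrite oddD odd_double => h.
  by rewrite /=; move: h; case: (odd k); case: (odd k').
have ne : W s k' != W s k'.+1.
  by apply/eqP => /W_inj; lia.
rewrite op; case: (odd k'.+1).
  by case: ltngtP ne => //= _ _; rewrite ?opprK.
by case: ltngtP ne => //= _ _; rewrite ?opprK.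
Qed.

Lemma es_same s k : (k < N)%N -> (k.+1 < a)%N || (a + r < k)%N -> es (Rp * s)%g k = es s k.
Proof.
move=> hk hout; rewrite /es !Dk_W // !W_Rp; try lia.
have -> : (a <= k <= a + r)%N = false by lia.
by have -> : (a <= k.+1 <= a + r)%N = false by lia.
Qed.

Variable f : 'I_N -> bool.
Hypothesis inrun : forall k, (a <= k < a + r)%N -> Ff f k.
Hypothesis lb : a = 0%N \/ ~~ Ff f a.-1.
Hypothesis rb : ~~ Ff f (a + r).

Lemma prod_flip s : \prod_(i < N | f i) es (Rp * s)%g i = - \prod_(i < N | f i) es s i.
Proof.
have conv : forall g : nat -> int, \prod_(i < N | f i) g i = \prod_(0 <= k < N | Ff f k) g k.
  by move=> g; rewrite big_mkord; apply: eq_bigl => i; rewrite Ff_val.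
rewrite !conv.
rewrite !(@big_cat_nat _ _ _ a 0 N) //=; try lia.
rewrite !(@big_cat_nat _ _ _ (a + r) a N) //=; try lia.
have P1 : \prod_(0 <= k < a | Ff f k) es (Rp*s)%g k = \prod_(0 <= k < a | Ff f k) es s k.
  rewrite big_nat_cond [RHS]big_nat_cond; apply: eq_bigr => k /andP [/andP [_ hk] Fk].
  apply: es_same; first lia.
  apply/orP; left; case: lb => [a0|nF]; first lia.
  case: (ltngtP k.+1 a) => // h; first lia.
  by move: nF; rewrite -h /= Fk.
have P3 : \prod_(a + r <= k < N | Ff f k) es (Rp*s)%g k = \prod_(a + r <= k < N | Ff f k) es s k.
  rewrite big_nat_cond [RHS]big_nat_cond; apply: eq_bigr => k /andP [/andP [hk1 hk] Fk].
  apply: es_same; first lia.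
  apply/orP; right; case: (ltngtP (a + r) k) => // h; first lia.
  by move: rb; rewrite h Fk.
have P2 : forall g : nat -> int,
    \prod_(a <= k < a + r | Ff f k) g k = \prod_(a <= k < a + r) g k.
  move=> g; rewrite big_nat_cond [RHS]big_nat_cond; apply: eq_bigl => k.
  by case/boolP: (a <= k < a + r)%N => //= hk; rewrite inrun.
rewrite P1 P3 !P2.
have -> : \prod_(a <= k < a + r) es (Rp * s)%g k =
          \prod_(a <= k < a + r) ((-1) * es s (a + (a + r) - k.+1)%N).
  by apply: eq_big_nat => k hk; rewrite es_flip // mulN1r.
rewrite big_split /= prodr_const_nat addKn -signr_odd ro expr1.
rewrite [X in _ = - (_ * (X * _))]big_nat_rev /=.
by rewrite mulN1r mulNr mulrN.
Qed.

Lemma vanish : \sum_(s : 'S_N.+1) \prod_(i < N | f i) es s i = 0.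
Proof.
set S := \sum_s _.
have : S = - S.
  rewrite {1}/S (reindex_inj (mulgI Rp)) /= /S -sumrN.
  by apply: eq_bigr => s _; rewrite prod_flip.
move=> h; lia.
Qed.

End Flip.

Lemma key N j : zdvdp ((1 + 'X) ^+ (if odd j then N./2 else N.+1./2)) (AhatSpec N.+1 j).
Proof.
set m := (if odd j then _ else _).
have mon : ((1 + 'X) ^+ m : {poly int}) \is monic.
  apply: monic_exp; have := monicXaddC (1 : int); by rewrite polyC1 addrC.
have dv : (1 + 'X) ^+ m %| (2%:R ^+ N : {poly int}) * AhatSpec N.+1 j.
  rewrite main_expand; apply: (big_ind (fun p : {poly int} => (1 + 'X) ^+ m %| p)) => [|x y|f _]; first exact: dvdp0.
    exact: dvdp_add.
  case: (classic (exists a r, oddrun (Ff f) N a r)) => [[a [r [ro ar inr lb rb]]]|no].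
    by rewrite (vanish ar ro inr lb rb) polyC0 mulr0 dvdp0.
  apply: dvdp_mulr; apply: divis; apply: (balanced (Ff_out f)).
  by move=> a r h; apply: no; exists a, r.
have e : (2%:R ^+ N : {poly int}) = ((2 ^+ N : int))%:P by rewrite rmorphXn /= polyC_natr.
move: dv; rewrite e mul_polyC dvdpZr; last by rewrite expf_neq0.
case/(Pdiv.IdomainMonic.dvdpP mon) => qq ->.
by exists qq; rewrite mulrC.
Qed.

Theorem theorem4p5 (n j : nat) : (1 <= n)%N ->
  [/\ (~~ odd n -> ~~ odd j -> zdvdp ((1 + 'X) ^+ n./2) (AhatSpec n j)),
      (~~ odd n -> odd j -> zdvdp ((1 + 'X) ^+ (n.-1)./2) (AhatSpec n j)),
      (odd n -> zdvdp ((1 + 'X) ^+ n./2) (AhatSpec n j))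
    & zdvdp ((1 + 'X) ^+ n./2) (AhatSpec n 0)].
Proof.
case: n => [//|N] _.
split.
- by move=> _ hj; have := key N j; rewrite (negbTE hj).
- by move=> _ hj; have := key N j; rewrite hj.
- move=> hn; have := key N j; case: (odd j) => //.
  by rewrite /= uphalf_half; move: hn => /= /negbTE ->.
- exact: (key N 0).
Qed.
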